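(* Assume the setting below with $\mu_+(1)\le1$, and suppose there is $\varepsilon\in(0,1]$ with $\kappa(s)<0$ for all $s\in(0,\varepsilon)$. Assume (A1), (A2), (A4), (A5), (A6), (A7), (A8), and in addition (i) $\phi'(1)+h'(1)=0$ and (ii) $\phi'(s)-h''(s^n)s^{2n-1}<0$ for all $s>1$. Then for every $\lambda\in(0,\varepsilon)$ there is no cavitating equilibrium solution with $r(1)=\lambda$.
   Context: Setting: $n\ge2$; $\kappa$ continuous on $[0,\infty)$, $\mu_+(\lambda)=\int_0^\lambda s\max\{\kappa(s),0\}ds$; $f$ solves $f''+\kappa f=0$, $f(0)=0$, $f'(0)=1$. $\Phi(v_1,\dots,v_n)=\sum_i\phi(v_i)+h(v_1\cdots v_n)$, $\tau(\rho)=f(r(\rho))/f(\rho)$, $T(\rho)=\tau^{n-1}\big[\phi'(r')+h'(r'\tau^{n-1})\tau^{n-1}\big]$. An equilibrium solution with $r(1)=\lambda$ is $r\in C^1(0,1]$, twice differentiable on $(0,1)$, $r'>0$ on $(0,1]$, $r(0):=\lim_{\rho\to0^+}r(\rho)\ge0$, $r(1)=\lambda$, satisfying on $(0,1)$ $$f(\rho)\big[\phi''(r')+h''(r'\tau^{n-1})\tau^{2(n-1)}\big]r''=(n-1)\big[f'(r)\phi'(\tau)-f'(\rho)\phi'(r')\big]-(n-1)\big(f'(r)r'-f'(\rho)\tau\big)h''(r'\tau^{n-1})\,r'\tau^{2n-3};$$ it is cavitating if $r(0)>0$ and $\lim_{\rho\to0^+}T(\rho)=0$. (A1) $h$ is $C^2$,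 strictly convex. (A2) $\lim_{v\to0^+}h(v)=\lim_{v\to\infty}h(v)/v=+\infty$. (A4) $\phi:(0,\infty)\to(0,\infty)$ $C^2$, convex. (A5) $v\phi'(v)$ increasing. (A6) there is $t_0\ge0$ with $\phi'(t_0)=0$; $q_1(s)=\sup_{v>t_0}\phi'(v)/\phi'(sv)$ ($s\ge1$), $q_0(s)=\inf_{v>t_0/s}\phi'(v)/\phi'(sv)$ ($s\in(0,1]$) satisfy $q_1\in C^1[1,\infty)$, $q_0\in C^1(0,1]$, $q_1(s)\to0$ ($s\to\infty$), $q_0(s)\to\infty$ ($s\to0^+$), $q_1'<0$, $q_0'<0$. (A7) there are $\delta_0,\delta_1>0$ with $|\phi'(sv)|\le\delta_1\phi(v)/v$ for all $v>0$ whenever $|s-1|<\delta_0$. (A8) $\phi(v)\le\delta_2(1+v^\alpha+v^{-\beta})$ for all $v>0$, $\delta_2>0$, $0<\alpha<n$, $0\le\beta<1+1/(n-1)$. *)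

(* Defs.v *)
From Stdlib Require Import Reals Lra.
Open Scope R_scope.

Definition deriv_within (D : R -> Prop) (F : R -> R) (x l : R) : Prop :=
  forall eps, 0 < eps -> exists delta, 0 < delta /\
    forall y, D y -> y <> x -> Rabs (y - x) < delta ->
      Rabs ((F y - F x) / (y - x) - l) < eps.

Definition cont_within (D : R -> Prop) (F : R -> R) (x : R) : Prop :=
  forall eps, 0 < eps -> exists delta, 0 < delta /\
    forall y, D y -> Rabs (y - x) < delta -> Rabs (F y - F x) < eps.

Definition nonneg_half (x : R) : Prop := 0 <= x.
Definition pos_half (x : R) : Prop := 0 < x.
Definition ge1_half (x : R) : Prop := 1 <= x.
Definition unit_lopen (x : R) : Prop := 0 < x <= 1.

Definition convex_pos (F : R -> R) : Prop :=
  forall x y t, 0 < x -> 0 < y -> 0 <= t <= 1 ->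
    F (t * x + (1 - t) * y) <= t * F x + (1 - t) * F y.
Definition strictly_convex_pos (F : R -> R) : Prop :=
  forall x y t, 0 < x -> 0 < y -> x <> y -> 0 < t < 1 ->
    F (t * x + (1 - t) * y) < t * F x + (1 - t) * F y.

Definition C2_pos (F F1 F2 : R -> R) : Prop :=
  (forall x, 0 < x -> derivable_pt_lim F x (F1 x)) /\
  (forall x, 0 < x -> derivable_pt_lim F1 x (F2 x)) /\
  (forall x, 0 < x -> continuity_pt F2 x).

Definition is_glb (E : R -> Prop) (m : R) : Prop :=
  (forall x, E x -> m <= x) /\ (forall b, (forall x, E x -> b <= x) -> b <= m).

(* mu_+(lambda) <= c, with mu_+(lambda) = int_0^lambda s max{kappa(s),0} ds. *)
Definition mu_plus_le (kappa : R -> R) (lam c : R) : Prop :=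
  forall pr : Riemann_integrable (fun s => s * Rmax (kappa s) 0) 0 lam,
    RiemannInt pr <= c.

Definition ode_solution (kappa f f1 : R -> R) : Prop :=
  (forall x, 0 <= x -> deriv_within nonneg_half f x (f1 x)) /\
  (forall x, 0 <= x -> deriv_within nonneg_half f1 x (- kappa x * f x)) /\
  f 0 = 0 /\ f1 0 = 1.

Definition A6 (phi1 : R -> R) : Prop :=
  exists t0 q1 q1d q0 q0d,
    0 <= t0 /\ phi1 t0 = 0 /\
    (forall s, 1 <= s ->
       is_lub (fun y => exists v, t0 < v /\ y = phi1 v / phi1 (s * v)) (q1 s)) /\
    (forall s, 0 < s <= 1 ->
       is_glb (fun y => exists v, t0 / s < v /\ y = phi1 v / phi1 (s * v)) (q0 s)) /\
    (forall s, 1 <= s -> deriv_within ge1_half q1 s (q1d s)) /\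
    (forall s, 1 <= s -> cont_within ge1_half q1d s) /\
    (forall s, 0 < s <= 1 -> deriv_within unit_lopen q0 s (q0d s)) /\
    (forall s, 0 < s <= 1 -> cont_within unit_lopen q0d s) /\
    (forall eps, 0 < eps -> exists S, forall s, S < s -> Rabs (q1 s) < eps) /\
    (forall M, exists d, 0 < d /\ forall s, 0 < s < d -> M < q0 s) /\
    (forall s, 1 <= s -> q1d s < 0) /\
    (forall s, 0 < s <= 1 -> q0d s < 0).

Definition tau (f r : R -> R) (rho : R) : R := f (r rho) / f rho.

Definition T_fun (n : nat) (f phi1 h1 r r1 : R -> R) (rho : R) : R :=
  let t := tau f r rho in
  t ^ (n - 1) * (phi1 (r1 rho) + h1 (r1 rho * t ^ (n - 1)) * t ^ (n - 1)).

(* r is an equilibrium solution with r(1) = lam, r' = r1, r'' = r2 on (0,1),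
   r(0) := lim_{rho->0+} r(rho) = r0. *)
Definition equilibrium (n : nat) (f f1 phi1 phi2 h2 : R -> R) (lam : R)
    (r r1 r2 : R -> R) (r0 : R) : Prop :=
  (forall rho, 0 < rho <= 1 -> deriv_within unit_lopen r rho (r1 rho)) /\
  (forall rho, 0 < rho <= 1 -> cont_within unit_lopen r1 rho) /\
  (forall rho, 0 < rho < 1 -> derivable_pt_lim r1 rho (r2 rho)) /\
  (forall rho, 0 < rho <= 1 -> 0 < r1 rho) /\
  (forall eps, 0 < eps -> exists d, 0 < d /\
     forall rho, 0 < rho < d -> Rabs (r rho - r0) < eps) /\
  0 <= r0 /\
  r 1 = lam /\
  (forall rho, 0 < rho < 1 ->
     let t := tau f r rho in
     let a := r1 rho * t ^ (n - 1) in
     f rho * (phi2 (r1 rho) + h2 a * t ^ (2 * (n - 1))) * r2 rho =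
       (INR n - 1) * (f1 (r rho) * phi1 t - f1 rho * phi1 (r1 rho))
       - (INR n - 1) * (f1 (r rho) * r1 rho - f1 rho * t) * h2 a
           * r1 rho * t ^ (2 * n - 3)).

Definition cavitating (n : nat) (f phi1 h1 r r1 : R -> R) (r0 : R) : Prop :=
  0 < r0 /\
  forall eps, 0 < eps -> exists d, 0 < d /\
    forall rho, 0 < rho < d -> Rabs (T_fun n f phi1 h1 r r1 rho) < eps.

(* Main.v *)
Require Import Defs.
From Stdlib Require Import Reals Lra Lia Classical.
Open Scope R_scope.


Lemma dl_cont F x l : derivable_pt_lim F x l -> forall e, 0 < e ->
  exists d, 0 < d /\ forall y, Rabs (y - x) < d -> Rabs (F y - F x) < e.
Proof.
  intros H e He. destruct (H 1 Rlt_0_1) as [[del Hdel] Hd]. simpl in Hd.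
  set (K := Rabs l + 1).
  assert (HK : 0 < K) by (unfold K; pose proof (Rabs_pos l); lra).
  exists (Rmin del (e / K)). split.
  { apply Rmin_glb_lt; [lra| apply Rdiv_lt_0_compat; lra]. }
  intros y Hy.
  destruct (Req_dec y x) as [->|Hne].
  { replace (F x - F x) with 0 by ring. rewrite Rabs_R0. lra. }
  set (h := y - x).
  assert (Hh : h <> 0) by (unfold h; lra).
  assert (Hhd : Rabs h < del) by (unfold h; pose proof (Rmin_l del (e/K)); lra).
  specialize (Hd h Hh Hhd). replace (x + h) with y in Hd by (unfold h; ring).
  set (q := (F y - F x) / h) in Hd.
  assert (Hq : Rabs q < K).
  { unfold K. pose proof (Rabs_triang (q - l) l). replace (q - l + l) with q in H0 by ring. lra. }
  assert (E : F y - F x = q * h) by (unfold q; field; auto).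
  rewrite E, Rabs_mult.
  assert (Hhe : Rabs h < e / K) by (unfold h; pose proof (Rmin_r del (e/K)); lra).
  assert (Rabs h * K < e).
  { apply (Rmult_lt_compat_r K) in Hhe; auto. unfold Rdiv in Hhe.
    rewrite Rmult_assoc, Rinv_l in Hhe by lra. lra. }
  pose proof (Rabs_pos h). pose proof (Rabs_pos q). nra.
Qed.

Lemma dw_cont D F x l : deriv_within D F x l -> forall e, 0 < e ->
  exists d, 0 < d /\ forall y, D y -> Rabs (y - x) < d -> Rabs (F y - F x) < e.
Proof.
  intros H e He. destruct (H 1 Rlt_0_1) as [del [Hdel Hd]].
  set (K := Rabs l + 1).
  assert (HK : 0 < K) by (unfold K; pose proof (Rabs_pos l); lra).
  exists (Rmin del (e / K)). split.
  { apply Rmin_glb_lt; [lra| apply Rdiv_lt_0_compat; lra]. }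
  intros y Dy Hy.
  destruct (Req_dec y x) as [->|Hne].
  { replace (F x - F x) with 0 by ring. rewrite Rabs_R0. lra. }
  assert (Hhd : Rabs (y - x) < del) by (pose proof (Rmin_l del (e/K)); lra).
  specialize (Hd y Dy Hne Hhd).
  set (h := y - x) in *.
  assert (Hh : h <> 0) by (unfold h; lra).
  set (q := (F y - F x) / h) in Hd.
  assert (Hq : Rabs q < K).
  { unfold K. pose proof (Rabs_triang (q - l) l). replace (q - l + l) with q in H0 by ring. lra. }
  assert (E : F y - F x = q * h) by (unfold q; field; auto).
  rewrite E, Rabs_mult.
  assert (Hhe : Rabs h < e / K) by (pose proof (Rmin_r del (e/K)); lra).
  assert (Rabs h * K < e).
  { apply (Rmult_lt_compat_r K) in Hhe; auto. unfold Rdiv in Hhe.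
    rewrite Rmult_assoc, Rinv_l in Hhe by lra. lra. }
  pose proof (Rabs_pos h). pose proof (Rabs_pos q). nra.
Qed.

Lemma dw_to_dl D F x l : (exists r, 0 < r /\ forall y, Rabs (y - x) < r -> D y) ->
  deriv_within D F x l -> derivable_pt_lim F x l.
Proof.
  intros [rr [Hr HD]] H eps Heps. destruct (H eps Heps) as [del [Hdel Hd]].
  assert (Hm : 0 < Rmin del rr) by (apply Rmin_glb_lt; lra).
  exists (mkposreal _ Hm). intros h Hh Hhd. simpl in Hhd.
  pose proof (Rmin_l del rr). pose proof (Rmin_r del rr).
  assert (E : x + h - x = h) by ring.
  specialize (Hd (x + h)). rewrite E in Hd. apply Hd; try lra.
  apply HD. rewrite E. lra.
Qed.

Lemma nbhd_pos x : 0 < x -> exists r, 0 < r /\ forall y, Rabs (y - x) < r -> nonneg_half y.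
Proof. intros Hx. exists x. split; auto. intros y Hy. unfold nonneg_half.
  apply Rabs_def2 in Hy. lra. Qed.

Lemma nbhd_unit x : 0 < x < 1 -> exists r, 0 < r /\ forall y, Rabs (y - x) < r -> unit_lopen y.
Proof. intros Hx. exists (Rmin x (1 - x)). split. apply Rmin_glb_lt; lra.
  intros y Hy. unfold unit_lopen. pose proof (Rmin_l x (1-x)). pose proof (Rmin_r x (1-x)).
  apply Rabs_def2 in Hy. lra. Qed.

Lemma nbhd_ge1 x : 1 < x -> exists r, 0 < r /\ forall y, Rabs (y - x) < r -> ge1_half y.
Proof. intros Hx. exists (x - 1). split. lra.
  intros y Hy. unfold ge1_half. apply Rabs_def2 in Hy. lra. Qed.

Lemma mono F F' a b : a < b -> (forall c, a <= c <= b -> derivable_pt_lim F c (F' c)) ->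
  (forall c, a < c < b -> 0 <= F' c) -> F a <= F b.
Proof.
  intros Hab Hd Hs. destruct (MVT_cor2 F F' a b Hab Hd) as [c [Ec Hc]].
  specialize (Hs c Hc). nra.
Qed.

Lemma smono F F' a b : a < b -> (forall c, a <= c <= b -> derivable_pt_lim F c (F' c)) ->
  (forall c, a < c < b -> 0 < F' c) -> F a < F b.
Proof.
  intros Hab Hd Hs. destruct (MVT_cor2 F F' a b Hab Hd) as [c [Ec Hc]].
  specialize (Hs c Hc). nra.
Qed.


Lemma conv_slope_l F F1 x y : convex_pos F -> derivable_pt_lim F x (F1 x) -> 0 < x < y ->
  F1 x <= (F y - F x) / (y - x).
Proof.
  intros Hc Hd Hxy. set (sl := (F y - F x) / (y - x)).
  destruct (Rle_or_lt (F1 x) sl) as [|Hlt]; auto. exfalso.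
  destruct (Hd (F1 x - sl)) as [[del Hdel] Hq]; [lra|]. simpl in Hq.
  set (h := Rmin (del/2) ((y - x)/2)).
  assert (Hh0 : 0 < h) by (apply Rmin_glb_lt; lra).
  assert (Hh1 : h <= del/2) by apply Rmin_l.
  assert (Hh2 : h <= (y-x)/2) by apply Rmin_r.
  specialize (Hq h ltac:(lra)). rewrite Rabs_pos_eq in Hq by lra. specialize (Hq ltac:(lra)).
  set (t := h / (y - x)).
  assert (Ht : 0 <= t <= 1).
  { unfold t; split. apply Rlt_le, Rdiv_lt_0_compat; lra.
    apply (Rmult_le_reg_r (y - x)); [lra|]. unfold Rdiv. rewrite Rmult_assoc, Rinv_l by lra. lra. }
  specialize (Hc y x t ltac:(lra) ltac:(lra) Ht).
  replace (t * y + (1 - t) * x) with (x + h) in Hc by (unfold t; field; lra).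
  assert (Hsl : F y - F x = sl * (y - x)) by (unfold sl; field; lra).
  set (q := (F (x + h) - F x) / h) in Hq.
  assert (Eq : F (x + h) - F x = q * h) by (unfold q; field; lra).
  assert (Et : t * (y - x) = h) by (unfold t; field; lra).
  assert (q * h <= sl * h) by nra.
  apply Rabs_def2 in Hq. nra.
Qed.

Lemma conv_slope_r F F1 x y : convex_pos F -> derivable_pt_lim F y (F1 y) -> 0 < x < y ->
  (F y - F x) / (y - x) <= F1 y.
Proof.
  intros Hc Hd Hxy. set (sl := (F y - F x) / (y - x)).
  destruct (Rle_or_lt sl (F1 y)) as [|Hlt]; auto. exfalso.
  destruct (Hd (sl - F1 y)) as [[del Hdel] Hq]; [lra|]. simpl in Hq.
  set (k := Rmin (del/2) ((y - x)/2)).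
  assert (Hh0 : 0 < k) by (apply Rmin_glb_lt; lra).
  assert (Hh1 : k <= del/2) by apply Rmin_l.
  assert (Hh2 : k <= (y-x)/2) by apply Rmin_r.
  specialize (Hq (- k) ltac:(lra)). rewrite Rabs_Ropp, Rabs_pos_eq in Hq by lra. specialize (Hq ltac:(lra)).
  set (t := k / (y - x)).
  assert (Ht : 0 <= t <= 1).
  { unfold t; split. apply Rlt_le, Rdiv_lt_0_compat; lra.
    apply (Rmult_le_reg_r (y - x)); [lra|]. unfold Rdiv. rewrite Rmult_assoc, Rinv_l by lra. lra. }
  specialize (Hc x y t ltac:(lra) ltac:(lra) Ht).
  replace (t * x + (1 - t) * y) with (y + - k) in Hc by (unfold t; field; lra).
  assert (Hsl : F y - F x = sl * (y - x)) by (unfold sl; field; lra).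
  set (q := (F (y + - k) - F y) / - k) in Hq.
  assert (Eq : F (y + - k) - F y = q * (- k)) by (unfold q; field; lra).
  assert (Et : t * (y - x) = k) by (unfold t; field; lra).
  assert (- (q * k) <= - (sl * k)) by nra.
  apply Rabs_def2 in Hq. nra.
Qed.

Lemma conv_mono F F1 : convex_pos F -> (forall x, 0 < x -> derivable_pt_lim F x (F1 x)) ->
  forall x y, 0 < x -> x <= y -> F1 x <= F1 y.
Proof.
  intros Hc Hd x y Hx Hxy. destruct (Req_dec x y) as [->|Hne]; [lra|].
  pose proof (conv_slope_l F F1 x y Hc (Hd x Hx) ltac:(lra)).
  pose proof (conv_slope_r F F1 x y Hc (Hd y ltac:(lra)) ltac:(lra)). lra.
Qed.

Lemma sconv_conv F : strictly_convex_pos F -> convex_pos F.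
Proof.
  intros Hs x y t Hx Hy Ht.
  destruct (Req_dec x y) as [->|Hne].
  { replace (t * y + (1 - t) * y) with y by ring. lra. }
  destruct (Req_dec t 0) as [->|Ht0].
  { replace (0 * x + (1 - 0) * y) with y by ring. lra. }
  destruct (Req_dec t 1) as [->|Ht1].
  { replace (1 * x + (1 - 1) * y) with x by ring. lra. }
  apply Rlt_le, Hs; auto; lra.
Qed.

Lemma deriv_nonneg G x l : 0 < x -> (forall u v, 0 < u -> u <= v -> G u <= G v) ->
  derivable_pt_lim G x l -> 0 <= l.
Proof.
  intros Hx Hm Hd. destruct (Rle_or_lt 0 l) as [|Hl]; auto. exfalso.
  destruct (Hd (- l)) as [[del Hdel] Hq]; [lra|]. simpl in Hq.
  set (h := del / 2).
  specialize (Hq h ltac:(unfold h; lra)). rewrite Rabs_pos_eq in Hq by (unfold h; lra).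
  specialize (Hq ltac:(unfold h; lra)).
  assert (G x <= G (x + h)) by (apply Hm; unfold h; lra).
  assert (0 <= (G (x + h) - G x) / h).
  { apply Rmult_le_pos; [lra| apply Rlt_le, Rinv_0_lt_compat; unfold h; lra]. }
  apply Rabs_def2 in Hq. lra.
Qed.


Lemma cont_sign w x l : derivable_pt_lim w x l -> w x <> 0 ->
  exists d, 0 < d /\ forall y, Rabs (y - x) < d -> (0 < w x -> 0 < w y) /\ (w x < 0 -> w y < 0).
Proof.
  intros Hd Hne. destruct (dl_cont w x l Hd (Rabs (w x))) as [d [Hd0 H]].
  { apply Rabs_pos_lt; auto. }
  exists d; split; auto. intros y Hy. specialize (H y Hy).
  apply Rabs_def2 in H. split; intros Hs.
  - rewrite Rabs_pos_eq in H by lra. lra.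
  - rewrite Rabs_left in H by lra. lra.
Qed.

Lemma deriv_neg_at w x l : derivable_pt_lim w x l -> l < 0 -> w x = 0 ->
  exists d, 0 < d /\ forall h, 0 < h < d -> w (x + h) < 0 /\ 0 < w (x - h).
Proof.
  intros Hd Hl H0. destruct (Hd (- l / 2)) as [[del Hdel] Hq]; [lra|]. simpl in Hq.
  exists del. split; auto. intros h Hh. split.
  - specialize (Hq h ltac:(lra)). rewrite Rabs_pos_eq in Hq by lra. specialize (Hq ltac:(lra)).
    rewrite H0 in Hq. apply Rabs_def2 in Hq.
    set (q := (w (x + h) - 0) / h) in Hq.
    assert (E : w (x + h) = q * h) by (unfold q; field; lra). nra.
  - specialize (Hq (- h) ltac:(lra)). rewrite Rabs_Ropp, Rabs_pos_eq in Hq by lra. specialize (Hq ltac:(lra)).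
    rewrite H0 in Hq. apply Rabs_def2 in Hq.
    set (q := (w (x + - h) - 0) / - h) in Hq.
    assert (E : w (x + - h) = q * - h) by (unfold q; field; lra).
    replace (x - h) with (x + - h) by ring. nra.
Qed.

Lemma deriv_le0 d x l : derivable_pt_lim d x l -> d x = 0 -> 0 < x ->
  (forall y, 0 < y < x -> 0 < d y) -> l <= 0.
Proof.
  intros Hd H0 Hx Hp. destruct (Rle_or_lt l 0) as [|Hl]; auto. exfalso.
  destruct (Hd (l / 2)) as [[del Hdel] Hq]; [lra|]. simpl in Hq.
  set (h := Rmin (del/2) (x/2)).
  assert (0 < h) by (apply Rmin_glb_lt; lra).
  assert (h <= del/2) by apply Rmin_l. assert (h <= x/2) by apply Rmin_r.
  specialize (Hq (- h) ltac:(lra)). rewrite Rabs_Ropp, Rabs_pos_eq in Hq by lra. specialize (Hq ltac:(lra)).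
  rewrite H0 in Hq. apply Rabs_def2 in Hq.
  set (q := (d (x + - h) - 0) / - h) in Hq.
  assert (E : d (x + - h) = q * - h) by (unfold q; field; lra).
  specialize (Hp (x + - h) ltac:(lra)). nra.
Qed.

Lemma neg_lemma (w w' : R -> R) (b : R) : 0 < b ->
  (forall x, 0 < x < b -> derivable_pt_lim w x (w' x)) ->
  (forall x, 0 < x < b -> w x = 0 -> w' x < 0) ->
  ~ (exists c, 0 < c < b /\ forall x, 0 < x <= c -> 0 < w x) ->
  forall x, 0 < x < b -> w x < 0.
Proof.
  intros Hb Hd Hz Hno x Hx.
  destruct (Rlt_or_le (w x) 0) as [|Hge]; auto. exfalso.
  assert (Hex : exists p, 0 < p <= x /\ 0 < w p).
  { destruct (Req_dec (w x) 0) as [H0|H0].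
    - destruct (deriv_neg_at w x (w' x) (Hd x Hx) (Hz x Hx H0) H0) as [d [Hd0 Hh]].
      exists (x - Rmin (d/2) (x/2)).
      assert (0 < Rmin (d/2) (x/2)) by (apply Rmin_glb_lt; lra).
      pose proof (Rmin_l (d/2) (x/2)). pose proof (Rmin_r (d/2) (x/2)).
      split; [lra|]. apply Hh. lra.
    - exists x. split; lra. }
  destruct Hex as [p [Hp Hwp]]. apply Hno. exists p. split; [lra|].
  intros y Hy. destruct (Rlt_or_le 0 (w y)) as [|Hy0]; auto. exfalso.
  assert (Hyp : y < p) by (destruct (Req_dec y p); subst; lra).
  set (Z := fun z => y <= z <= p /\ w z <= 0).
  assert (Hbd : bound Z) by (exists p; intros z Hzz; unfold Z in Hzz; lra).
  assert (Hne : exists z, Z z) by (exists y; unfold Z; split; lra).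
  destruct (completeness Z Hbd Hne) as [m [Hub Hlub]].
  assert (Hym : y <= m) by (apply Hub; unfold Z; split; lra).
  assert (Hmp : m <= p) by (apply Hlub; intros z Hzz; unfold Z in Hzz; lra).
  assert (Hdm : derivable_pt_lim w m (w' m)) by (apply Hd; lra).
  assert (Hwm : w m <= 0).
  { destruct (Rle_or_lt (w m) 0) as [|Hpos]; auto. exfalso.
    destruct (cont_sign w m (w' m) Hdm ltac:(lra)) as [d [Hd0 Hs]].
    assert (Hub2 : is_upper_bound Z (m - d/2)).
    { intros z Hzz. pose proof (Hub z Hzz). unfold Z in Hzz.
      destruct (Rle_or_lt z (m - d/2)) as [|Hz2]; auto.
      assert (Rabs (z - m) < d) by (apply Rabs_def1; lra).
      destruct (Hs z H0) as [Hs1 _]. specialize (Hs1 Hpos). lra. }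
    specialize (Hlub _ Hub2). lra. }
  assert (Hmlt : m < p) by (destruct (Req_dec m p); subst; lra).
  assert (Hright : forall z, m < z <= p -> 0 < w z).
  { intros z Hzz. destruct (Rlt_or_le 0 (w z)) as [|Hz0]; auto.
    assert (Z z) by (unfold Z; split; lra). pose proof (Hub z H). lra. }
  assert (Hw0 : w m = 0).
  { destruct (Req_dec (w m) 0) as [|Hn]; auto. exfalso.
    destruct (cont_sign w m (w' m) Hdm Hn) as [d [Hd0 Hs]].
    set (z := m + Rmin (d/2) ((p - m)/2)).
    assert (0 < Rmin (d/2) ((p-m)/2)) by (apply Rmin_glb_lt; lra).
    pose proof (Rmin_l (d/2) ((p-m)/2)). pose proof (Rmin_r (d/2) ((p-m)/2)).
    assert (Rabs (z - m) < d) by (apply Rabs_def1; unfold z; lra).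
    destruct (Hs z H2) as [_ Hs2]. specialize (Hs2 ltac:(lra)).
    specialize (Hright z ltac:(unfold z; lra)). lra. }
  assert (Hm0 : 0 < m < b) by lra.
  destruct (deriv_neg_at w m (w' m) Hdm (Hz m Hm0 Hw0) Hw0) as [d [Hd0 Hh]].
  set (k := Rmin (d/2) ((p - m)/2)).
  assert (0 < k) by (apply Rmin_glb_lt; lra).
  pose proof (Rmin_l (d/2) ((p-m)/2)). pose proof (Rmin_r (d/2) ((p-m)/2)).
  destruct (Hh k ltac:(unfold k in *; lra)) as [Hk1 _].
  specialize (Hright (m + k) ltac:(unfold k in *; lra)). lra.
Qed.

Lemma no_blowup (r r1 : R -> R) (k c r0 : R) : 0 < c -> 0 < k -> 0 < r0 ->
  (forall x, 0 < x <= c -> derivable_pt_lim r x (r1 x)) ->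
  (forall x, 0 < x <= c -> k / x < r1 x) ->
  (forall x, 0 < x <= c -> r0 <= r x) -> False.
Proof.
  intros Hc Hk Hr0 Hd Hb Hge.
  set (G := fun x => r x - k * ln x).
  set (x := exp (ln c - r c / k - 1)).
  assert (Hx0 : 0 < x) by apply exp_pos.
  assert (Hxc : x < c).
  { unfold x. apply Rlt_le_trans with (exp (ln c)); [|rewrite exp_ln; lra]. apply exp_increasing.
    assert (0 <= r c / k) by (apply Rmult_le_pos; [pose proof (Hge c ltac:(lra)); lra | left; apply Rinv_0_lt_compat; lra]).
    lra. }
  assert (HG : G x <= G c).
  { apply (mono G (fun z => r1 z - k * / z)); auto.
    - intros z Hz. unfold G. apply derivable_pt_lim_minus.
      + apply Hd; lra.
      + replace (k * / z) with (0 * ln z + k * / z) by ring.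
        apply (derivable_pt_lim_mult (fct_cte k) ln). apply derivable_pt_lim_const.
        apply derivable_pt_lim_ln; lra.
    - intros z Hz. specialize (Hb z ltac:(lra)). unfold Rdiv in Hb. lra. }
  unfold G in HG. unfold x in HG at 2. rewrite ln_exp in HG.
  assert (E : k * (ln c - r c / k - 1) = k * ln c - r c - k) by (field; lra).
  rewrite E in HG. pose proof (Hge x ltac:(lra)). lra.
Qed.

Lemma ode_df kappa f f1 : ode_solution kappa f f1 -> forall x, 0 < x -> derivable_pt_lim f x (f1 x).
Proof. intros [H _] x Hx. apply (dw_to_dl nonneg_half). apply nbhd_pos; auto. apply H; lra. Qed.

Lemma ode_df1 kappa f f1 : ode_solution kappa f f1 -> forall x, 0 < x ->
  derivable_pt_lim f1 x (- kappa x * f x).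
Proof. intros [_ [H _]] x Hx. apply (dw_to_dl nonneg_half). apply nbhd_pos; auto. apply H; lra. Qed.

Lemma ode_lim0 kappa f f1 : ode_solution kappa f f1 -> forall e, 0 < e ->
  exists d, 0 < d /\ forall y, 0 < y < d -> Rabs (f y) < e /\ Rabs (f1 y - 1) < e.
Proof.
  intros Ho e He. destruct Ho as [Hf [Hf1 [H0 H1]]].
  destruct (dw_cont _ _ _ _ (Hf 0 (Rle_refl 0)) e He) as [d1 [Hd1 Hc1]].
  destruct (dw_cont _ _ _ _ (Hf1 0 (Rle_refl 0)) e He) as [d2 [Hd2 Hc2]].
  exists (Rmin d1 d2). split. apply Rmin_glb_lt; lra.
  intros y Hy. pose proof (Rmin_l d1 d2). pose proof (Rmin_r d1 d2).
  assert (Rabs (y - 0) < d1) by (rewrite Rminus_0_r, Rabs_pos_eq; lra).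
  assert (Rabs (y - 0) < d2) by (rewrite Rminus_0_r, Rabs_pos_eq; lra).
  specialize (Hc1 y ltac:(unfold nonneg_half; lra) H3). specialize (Hc2 y ltac:(unfold nonneg_half; lra) H4).
  rewrite H0, Rminus_0_r in Hc1. rewrite H1 in Hc2. auto.
Qed.

Lemma f_facts kappa f f1 eps : ode_solution kappa f f1 -> 0 < eps ->
  (forall s, 0 < s < eps -> kappa s < 0) ->
  forall x, 0 < x < eps -> 0 < f x /\ 1 <= f1 x.
Proof.
  intros Ho Heps Hk.
  pose proof (ode_df _ _ _ Ho) as Hdf. pose proof (ode_df1 _ _ _ Ho) as Hdf1.
  pose proof (ode_lim0 _ _ _ Ho) as Hlim.
  destruct Ho as [Hf [Hf1 [Hf0 Hf10]]].
  set (A := fun x => 0 < x < eps /\ forall t, 0 < t <= x -> 0 < f t).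
  assert (HbA : bound A) by (exists eps; intros x Hx; unfold A in Hx; lra).
  assert (HneA : exists x, A x).
  { destruct (Hf 0 (Rle_refl 0) (1/2)) as [d [Hd Hq]]; [lra|].
    exists (Rmin d eps / 2). pose proof (Rmin_l d eps). pose proof (Rmin_r d eps).
    assert (0 < Rmin d eps) by (apply Rmin_glb_lt; lra).
    split; [lra|]. intros t Ht.
    specialize (Hq t ltac:(unfold nonneg_half; lra) ltac:(lra) ltac:(rewrite Rminus_0_r, Rabs_pos_eq; lra)).
    rewrite Hf0, Hf10, !Rminus_0_r in Hq. apply Rabs_def2 in Hq.
    set (q := f t / t) in Hq. assert (E : f t = q * t) by (unfold q; field; lra). nra. }
  destruct (completeness A HbA HneA) as [m [Hub Hlub]].
  assert (Hm0 : 0 < m) by (destruct HneA as [x Hx]; pose proof (Hub x Hx); unfold A in Hx; lra).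
  assert (Hme : m <= eps) by (apply Hlub; intros x Hx; unfold A in Hx; lra).
  assert (H1 : forall t, 0 < t < m -> 0 < f t).
  { intros t Ht. destruct (classic (exists x, A x /\ t <= x)) as [[x [Ax Htx]]|Hn].
    - apply (proj2 Ax). lra.
    - exfalso. assert (is_upper_bound A t).
      { intros x Ax. destruct (Rle_or_lt x t); auto. exfalso. apply Hn. exists x. split; auto; lra. }
      specialize (Hlub t H). lra. }
  assert (H2 : forall t, 0 < t < m -> 1 <= f1 t).
  { intros t Ht. destruct (Rle_or_lt 1 (f1 t)) as [|Hl]; auto. exfalso.
    destruct (Hlim (1 - f1 t)) as [d [Hd Hc]]; [lra|].
    set (a := Rmin d t / 2). assert (0 < Rmin d t) by (apply Rmin_glb_lt; lra).
    pose proof (Rmin_l d t). pose proof (Rmin_r d t).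
    assert (f1 a <= f1 t).
    { apply (mono f1 (fun c => - kappa c * f c)). unfold a; lra.
      - intros c Hc'. apply Hdf1. unfold a in Hc'; lra.
      - intros c Hc'. assert (kappa c < 0) by (apply Hk; unfold a in Hc'; lra).
        assert (0 < f c) by (apply H1; unfold a in Hc'; lra). nra. }
    destruct (Hc a ltac:(unfold a; lra)) as [_ Hc2]. apply Rabs_def2 in Hc2. lra. }
  assert (H3 : forall t, 0 < t < m -> t <= f t).
  { intros t Ht. destruct (Rle_or_lt t (f t)) as [|Hl]; auto. exfalso.
    destruct (Hlim ((t - f t)/2)) as [d0 [Hd0 Hc]]; [lra|].
    set (d := Rmin d0 ((t - f t)/2)). assert (Hd : 0 < d) by (apply Rmin_glb_lt; lra).
    assert (d <= d0) by apply Rmin_l. assert (d <= (t - f t)/2) by apply Rmin_r.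
    set (a := Rmin d t / 2). assert (0 < Rmin d t) by (apply Rmin_glb_lt; lra).
    pose proof (Rmin_l d t). pose proof (Rmin_r d t).
    assert (f a - a <= f t - t).
    { apply (mono (fun x => f x - x) (fun c => f1 c - 1)). unfold a; lra.
      - intros c Hc'. apply derivable_pt_lim_minus. apply Hdf. unfold a in Hc'; lra.
        apply derivable_pt_lim_id.
      - intros c Hc'. pose proof (H2 c ltac:(unfold a in Hc'; lra)). lra. }
    destruct (Hc a ltac:(unfold a; lra)) as [Hc1 _]. apply Rabs_def2 in Hc1. unfold a in *. lra. }
  assert (Hmeq : m = eps).
  { destruct (Req_dec m eps) as [|Hne]; auto. exfalso.
    assert (Hfm : 0 < f m).
    { destruct (dl_cont f m (f1 m) (Hdf m Hm0) (m/2)) as [d [Hd Hc]]; [lra|].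
      pose proof (Rmax_l (m - d/2) (m/2)). pose proof (Rmax_r (m - d/2) (m/2)).
      set (t := Rmax (m - d/2) (m/2)) in *.
      assert (t < m) by (unfold t; apply Rmax_lub_lt; lra).
      specialize (Hc t ltac:(apply Rabs_def1; lra)). pose proof (H3 t ltac:(lra)).
      apply Rabs_def2 in Hc. lra. }
    destruct (cont_sign f m (f1 m) (Hdf m Hm0) ltac:(lra)) as [d [Hd Hs]].
    pose proof (Rmin_l (m + d/2) ((m + eps)/2)). pose proof (Rmin_r (m + d/2) ((m + eps)/2)).
    set (x := Rmin (m + d/2) ((m + eps)/2)) in *.
    assert (m < x) by (apply Rmin_glb_lt; lra).
    assert (HAx : A x).
    { split; [lra|]. intros t Ht. destruct (Rlt_or_le t m). apply H1; lra.
      apply (proj1 (Hs t ltac:(apply Rabs_def1; lra))). auto. }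
    pose proof (Hub x HAx). lra. }
  subst m. intros x Hx. split; [apply H1 | apply H2]; auto.
Qed.

Lemma f1_strict kappa f f1 eps : ode_solution kappa f f1 -> 0 < eps ->
  (forall s, 0 < s < eps -> kappa s < 0) ->
  forall x y, 0 < x -> x < y -> y < eps -> f1 x < f1 y.
Proof.
  intros Ho He Hk x y Hx Hxy Hy.
  apply (smono f1 (fun c => - kappa c * f c)); auto.
  - intros c Hc. apply (ode_df1 _ _ _ Ho). lra.
  - intros c Hc. pose proof (Hk c ltac:(lra)). destruct (f_facts _ _ _ _ Ho He Hk c ltac:(lra)). nra.
Qed.

Lemma f_strict kappa f f1 eps : ode_solution kappa f f1 -> 0 < eps ->
  (forall s, 0 < s < eps -> kappa s < 0) ->
  forall x y, 0 < x -> x < y -> y < eps -> f x < f y.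
Proof.
  intros Ho He Hk x y Hx Hxy Hy.
  apply (smono f f1); auto.
  - intros c Hc. apply (ode_df _ _ _ Ho). lra.
  - intros c Hc. destruct (f_facts _ _ _ _ Ho He Hk c ltac:(lra)). lra.
Qed.

Lemma f_lin kappa f f1 eps : ode_solution kappa f f1 -> 0 < eps ->
  (forall s, 0 < s < eps -> kappa s < 0) ->
  forall x y, 0 < x -> x <= y -> y < eps -> f x <= f1 y * x.
Proof.
  intros Ho He Hk x y Hx Hxy Hy.
  destruct (Rle_or_lt (f x) (f1 y * x)) as [|Hl]; auto. exfalso.
  destruct (ode_lim0 _ _ _ Ho ((f x - f1 y * x)/2)) as [d0 [Hd0 Hc]]; [lra|].
  pose proof (Rmin_l d0 x). pose proof (Rmin_r d0 x).
  assert (0 < Rmin d0 x) by (apply Rmin_glb_lt; lra).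
  set (a := Rmin d0 x / 2).
  assert (f1 y * a - f a <= f1 y * x - f x).
  { apply (mono (fun z => f1 y * z - f z) (fun c => f1 y * 1 - f1 c)). unfold a; lra.
    - intros c Hc'. apply derivable_pt_lim_minus.
      + apply (derivable_pt_lim_scal id). apply derivable_pt_lim_id.
      + apply (ode_df _ _ _ Ho). unfold a in Hc'; lra.
    - intros c Hc'. destruct (Req_dec c y) as [->|Hne]; [lra|].
      pose proof (f1_strict _ _ _ _ Ho He Hk c y ltac:(unfold a in Hc'; lra) ltac:(lra) Hy). lra. }
  destruct (Hc a ltac:(unfold a; lra)) as [Hc1 _]. apply Rabs_def2 in Hc1.
  destruct (f_facts _ _ _ _ Ho He Hk y ltac:(lra)).
  assert (0 < a) by (unfold a; lra). nra.
Qed.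

Lemma f_small kappa f f1 : ode_solution kappa f f1 ->
  forall e, 0 < e -> exists d, 0 < d /\ forall y, 0 < y < d -> f y < e.
Proof.
  intros Ho e He. destruct (ode_lim0 _ _ _ Ho e He) as [d [Hd Hc]]. exists d. split; auto.
  intros y Hy. destruct (Hc y Hy) as [H _]. apply Rabs_def2 in H. lra.
Qed.

Lemma A6_pos phi1 : (forall x y, 0 < x -> x <= y -> phi1 x <= phi1 y) -> A6 phi1 ->
  exists V, 0 < V /\ forall v, V <= v -> 0 < phi1 v.
Proof.
  intros Hm HA.
  destruct (classic (exists V, 0 < V /\ 0 < phi1 V)) as [[V [HV HpV]]|Hn].
  { exists V. split; auto. intros v Hv. pose proof (Hm V v HV Hv). lra. }
  exfalso.
  assert (Hle : forall v, 0 < v -> phi1 v <= 0).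
  { intros v Hv. destruct (Rle_or_lt (phi1 v) 0); auto. exfalso. apply Hn. exists v. auto. }
  destruct HA as [t0 [q1 [q1d [q0 [q0d [Ht0 [Hp0 [Hlub1 [_ [Hd1 [_ [_ [_ [Hlim1 [_ [Hneg1 _]]]]]]]]]]]]]]]].
  assert (Hdl : forall s, 1 < s -> derivable_pt_lim q1 s (q1d s)).
  { intros s Hs. apply (dw_to_dl ge1_half). apply nbhd_ge1; auto. apply Hd1; lra. }
  assert (Hdec : forall a b, 1 < a -> a < b -> q1 b < q1 a).
  { intros a b Ha Hab. destruct (MVT_cor2 q1 q1d a b Hab) as [c [Ec Hc]].
    { intros c Hc. apply Hdl; lra. }
    pose proof (Hneg1 c ltac:(lra)). nra. }
  assert (Hpos : forall s, 1 < s -> 0 < q1 s).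
  { intros s Hs. destruct (Rlt_or_le 0 (q1 s)) as [|Hq]; auto. exfalso.
    pose proof (Hdec s (s+1) Hs ltac:(lra)).
    destruct (Hlim1 (- q1 (s+1))) as [S HS]; [lra|].
    set (s2 := Rmax S (s+1) + 1).
    pose proof (Rmax_l S (s+1)). pose proof (Rmax_r S (s+1)).
    specialize (HS s2 ltac:(unfold s2; lra)).
    pose proof (Hdec (s+1) s2 ltac:(lra) ltac:(unfold s2; lra)).
    apply Rabs_def2 in HS. lra. }
  destruct (Hlim1 1 Rlt_0_1) as [S HS].
  set (s := Rmax S 1 + 1).
  pose proof (Rmax_l S 1). pose proof (Rmax_r S 1).
  specialize (HS s ltac:(unfold s; lra)). apply Rabs_def2 in HS.
  specialize (Hpos s ltac:(unfold s; lra)).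
  destruct (Hlub1 s ltac:(unfold s; lra)) as [Hub Hl].
  destruct (classic (exists y, (exists v, t0 < v /\ y = phi1 v / phi1 (s * v)) /\ 0 < y)) as [[y [[v [Hv Ey]] Hy]]|Hn2].
  - pose proof (Hub y (ex_intro _ v (conj Hv Ey))).
    assert (Hs1 : 1 <= s) by (unfold s; lra).
    pose proof (Hm v (s * v) ltac:(lra) ltac:(nra)).
    pose proof (Hle (s * v) ltac:(nra)). pose proof (Hle v ltac:(lra)).
    destruct (Req_dec (phi1 (s * v)) 0) as [Hz|Hz].
    + rewrite Hz in Ey. unfold Rdiv in Ey. rewrite Rinv_0, Rmult_0_r in Ey. lra.
    + assert (1 <= y).
      { rewrite Ey. apply (Rmult_le_reg_r (- phi1 (s * v))); [lra|].
        unfold Rdiv. replace (phi1 v * / phi1 (s * v) * - phi1 (s * v)) with (- phi1 v) by (field; auto).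
        lra. }
      lra.
  - assert (is_upper_bound (fun y => exists v, t0 < v /\ y = phi1 v / phi1 (s * v)) 0).
    { intros y Hy. destruct (Rle_or_lt y 0); auto. exfalso. apply Hn2. exists y. auto. }
    specialize (Hl 0 H1). lra.
Qed.

Lemma key_alg F t u f1r f1p p1r p1t p2 h2a r1 r2 k :
  F <> 0 -> t <> 0 -> u <> 0 ->
  F * (p2 + h2a * ((t * u) * (t * u))) * r2 =
    k * (f1r * p1t - f1p * p1r) - k * (f1r * r1 - f1p * t) * h2a * r1 * (t * (u * u)) ->
  F * (t * u) * t *
   ((p2 * r2 * (t * u) - (k * u * ((f1r * r1 - f1p * t) / F)) * p1r) / Rsqr (t * u)
    + h2a * (r2 * (t * u) + r1 * (k * u * ((f1r * r1 - f1p * t) / F))))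
  = k * f1r * (t * p1t - r1 * p1r).
Proof.
  intros HF Ht Hu H.
  set (L := F * (p2 + h2a * ((t * u) * (t * u))) * r2) in H.
  transitivity (t * L + k * (f1r * r1 - f1p * t) * h2a * r1 * t * (t * (u * u)) - k * (f1r * r1 - f1p * t) * p1r + 0).
  { unfold L, Rsqr. field. auto. }
  rewrite H. ring.
Qed.

Lemma pow_Sm t m : t ^ (S (S m) - 1) = t * t ^ m.
Proof. replace (S (S m) - 1)%nat with (S m) by lia. reflexivity. Qed.
Lemma pow_2n1 t m : t ^ (2 * (S (S m) - 1)) = (t * t ^ m) * (t * t ^ m).
Proof. replace (2 * (S (S m) - 1))%nat with (S m + S m)%nat by lia. rewrite pow_add. reflexivity. Qed.
Lemma pow_2n3 t m : t ^ (2 * S (S m) - 3) = t * (t ^ m * t ^ m).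
Proof. replace (2 * S (S m) - 3)%nat with (S (m + m))%nat by lia. simpl. rewrite pow_add. reflexivity. Qed.
Lemma pow_2nm1 t m : t ^ (2 * S (S m) - 1) = t * t * t * (t ^ m * t ^ m).
Proof. replace (2 * S (S m) - 1)%nat with (S (S (S (m + m))))%nat by lia. simpl. rewrite pow_add. ring. Qed.
Lemma pow_n t m : t ^ (S (S m)) = t * (t * t ^ m).
Proof. reflexivity. Qed.
Lemma INR_n1 m : INR (S (S m)) - 1 = INR (S m).
Proof. rewrite (S_INR (S m)). ring. Qed.

Lemma dl_eq F x l l' : derivable_pt_lim F x l -> l = l' -> derivable_pt_lim F x l'.
Proof. intros H ->. exact H. Qed.

Lemma tau_deriv f f1 r r1 rho : derivable_pt_lim f rho (f1 rho) ->
  derivable_pt_lim f (r rho) (f1 (r rho)) -> derivable_pt_lim r rho (r1 rho) -> f rho <> 0 ->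
  derivable_pt_lim (tau f r) rho ((f1 (r rho) * r1 rho - f1 rho * tau f r rho) / f rho).
Proof.
  intros Hf Hfr Hr Hne.
  pose proof (derivable_pt_lim_comp r f rho _ _ Hr Hfr) as Hc.
  pose proof (derivable_pt_lim_div (comp f r) f rho _ _ Hc Hf Hne) as Hd.
  unfold tau. apply (dl_eq _ _ _ _ Hd). unfold comp, Rsqr. field. auto.
Qed.

Lemma Sig_deriv phi1 phi2 h1 h2 r1 r2 T dT m rho :
  derivable_pt_lim T rho dT -> derivable_pt_lim r1 rho (r2 rho) ->
  derivable_pt_lim phi1 (r1 rho) (phi2 (r1 rho)) ->
  derivable_pt_lim h1 (r1 rho * T rho ^ S m) (h2 (r1 rho * T rho ^ S m)) ->
  T rho ^ S m <> 0 ->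
  derivable_pt_lim (fun y => phi1 (r1 y) / (T y) ^ S m + h1 (r1 y * (T y) ^ S m)) rho
   ((phi2 (r1 rho) * r2 rho * (T rho ^ S m) - (INR (S m) * T rho ^ m * dT) * phi1 (r1 rho))
      / Rsqr (T rho ^ S m)
    + h2 (r1 rho * T rho ^ S m) * (r2 rho * T rho ^ S m + r1 rho * (INR (S m) * T rho ^ m * dT))).
Proof.
  intros HT Hr1 Hp Hh Hne.
  pose proof (derivable_pt_lim_comp T (fun x => x ^ S m) rho _ _ HT (derivable_pt_lim_pow (T rho) (S m))) as HE.
  simpl pred in HE.
  pose proof (derivable_pt_lim_comp r1 phi1 rho _ _ Hr1 Hp) as Hpr.
  pose proof (derivable_pt_lim_div _ _ rho _ _ Hpr HE Hne) as H1.
  pose proof (derivable_pt_lim_mult _ _ rho _ _ Hr1 HE) as Hm.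
  pose proof (derivable_pt_lim_comp _ h1 rho _ _ Hm Hh) as H2.
  pose proof (derivable_pt_lim_plus _ _ rho _ _ H1 H2) as H3.
  unfold comp, div_fct, mult_fct, plus_fct in H3.
  exact H3.
Qed.

Lemma div_le a b c d : 0 < b -> 0 < d -> a * d <= c * b -> a / b <= c / d.
Proof.
  intros Hb Hd H. apply (Rmult_le_reg_r (b * d)); [nra|].
  replace (a / b * (b * d)) with (a * d) by (field; lra).
  replace (c / d * (b * d)) with (c * b) by (field; lra). lra.
Qed.

Theorem theorem4p5
  (n : nat) (kappa f f1 phi phi1 phi2 h h1 h2 : R -> R) (eps : R) :
  (2 <= n)%nat ->
  (forall x, 0 <= x -> cont_within nonneg_half kappa x) ->
  ode_solution kappa f f1 ->
  mu_plus_le kappa 1 1 ->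
  0 < eps <= 1 ->
  (forall s, 0 < s < eps -> kappa s < 0) ->
  (* (A1) *)
  C2_pos h h1 h2 -> strictly_convex_pos h ->
  (* (A2) *)
  (forall M, exists d, 0 < d /\ forall v, 0 < v < d -> M < h v) ->
  (forall M, exists V, forall v, V < v -> M < h v / v) ->
  (* (A4) *)
  (forall v, 0 < v -> 0 < phi v) -> C2_pos phi phi1 phi2 -> convex_pos phi ->
  (* (A5) *)
  (forall u v, 0 < u -> u <= v -> u * phi1 u <= v * phi1 v) ->
  (* (A6) *)
  A6 phi1 ->
  (* (A7) *)
  (exists d0 d1, 0 < d0 /\ 0 < d1 /\
     forall s v, 0 < v -> 0 < s -> Rabs (s - 1) < d0 ->
       Rabs (phi1 (s * v)) <= d1 * phi v / v) ->
  (* (A8) *)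
  (exists d2 alpha beta, 0 < d2 /\ 0 < alpha < INR n /\
     0 <= beta < 1 + 1 / (INR n - 1) /\
     forall v, 0 < v -> phi v <= d2 * (1 + Rpower v alpha + Rpower v (- beta))) ->
  (* (i) *)
  phi1 1 + h1 1 = 0 ->
  (* (ii) *)
  (forall s, 1 < s -> phi1 s - h2 (s ^ n) * s ^ (2 * n - 1) < 0) ->
  forall lam, 0 < lam < eps ->
    ~ (exists (r r1 r2 : R -> R) (r0 : R),
         equilibrium n f f1 phi1 phi2 h2 lam r r1 r2 r0 /\
         cavitating n f phi1 h1 r r1 r0).
Proof.
  intros Hn Hkc Ho Hmu Heps Hk HC2h Hsch HA2a HA2b Hphipos HC2p Hconvp HA5 HA6 HA7 HA8 Hi Hii
    lam Hlam [r [r1 [r2 [r0 [Heq Hcav]]]]].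
  destruct n as [|[|m]]; [lia|lia|]. clear Hn.
  destruct Heq as [Hrd [Hr1c [Hr2 [Hr1p [Hr0lim [Hr00 [Hr1l Hode]]]]]]].
  destruct Hcav as [Hr0p HT].
  destruct HC2p as [Hp1 [Hp2 _]]. destruct HC2h as [Hh1 [Hh2 _]].
  assert (Hp1m : forall x y, 0 < x -> x <= y -> phi1 x <= phi1 y) by (apply (conv_mono phi); auto).
  assert (Hh1m : forall x y, 0 < x -> x <= y -> h1 x <= h1 y).
  { apply (conv_mono h); auto. apply sconv_conv; auto. }
  assert (Hp2n : forall x, 0 < x -> 0 <= phi2 x) by (intros x Hx; apply (deriv_nonneg phi1 x); auto).
  assert (Hh2n : forall x, 0 < x -> 0 <= h2 x) by (intros x Hx; apply (deriv_nonneg h1 x); auto).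
  destruct (A6_pos phi1 Hp1m HA6) as [V [HV HVp]].
  destruct Heps as [Heps0 Heps1].
  pose proof (f_facts _ _ _ _ Ho Heps0 Hk) as Hff.
  pose proof (f_strict _ _ _ _ Ho Heps0 Hk) as Hfs.
  pose proof (f1_strict _ _ _ _ Ho Heps0 Hk) as Hf1s.
  pose proof (f_lin _ _ _ _ Ho Heps0 Hk) as Hfl.
  pose proof (ode_df _ _ _ Ho) as Hdf.
  assert (Hrdl : forall x, 0 < x < 1 -> derivable_pt_lim r x (r1 x)).
  { intros x Hx. apply (dw_to_dl unit_lopen). apply nbhd_unit; auto. apply Hrd; lra. }
  assert (Hrinc : forall x y, 0 < x -> x < y -> y < 1 -> r x < r y).
  { intros x y Hx Hxy Hy. apply (smono r r1); auto.
    intros c Hc; apply Hrdl; lra. intros c Hc; apply Hr1p; lra. }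
  assert (Hrge : forall x, 0 < x < 1 -> r0 <= r x).
  { intros x Hx. destruct (Rle_or_lt r0 (r x)) as [|Hl]; auto. exfalso.
    destruct (Hr0lim (r0 - r x)) as [d [Hd Hc]]; [lra|].
    pose proof (Rmin_l d x). pose proof (Rmin_r d x). assert (0 < Rmin d x) by (apply Rmin_glb_lt; lra).
    specialize (Hc (Rmin d x / 2) ltac:(lra)). apply Rabs_def2 in Hc.
    pose proof (Hrinc (Rmin d x / 2) x ltac:(lra) ltac:(lra) ltac:(lra)). lra. }
  assert (Hrlt : forall x, 0 < x < 1 -> r x < lam).
  { intros x Hx. pose proof (Hrinc x ((x+1)/2) ltac:(lra) ltac:(lra) ltac:(lra)).
    destruct (Rle_or_lt (r ((x+1)/2)) lam) as [|Hl]; [lra|]. exfalso.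
    destruct (dw_cont _ _ _ _ (Hrd 1 ltac:(lra)) (r ((x+1)/2) - lam)) as [d [Hd Hc]]; [lra|].
    pose proof (Rmax_l ((x+1)/2) (1 - d)). pose proof (Rmax_r ((x+1)/2) (1 - d)).
    assert (Rmax ((x+1)/2) (1 - d) < 1) by (apply Rmax_lub_lt; lra).
    set (y := (Rmax ((x+1)/2) (1 - d) + 1) / 2).
    specialize (Hc y ltac:(unfold unit_lopen, y; lra) ltac:(apply Rabs_def1; unfold y; lra)).
    rewrite Hr1l in Hc. apply Rabs_def2 in Hc.
    pose proof (Hrinc ((x+1)/2) y ltac:(lra) ltac:(unfold y; lra) ltac:(unfold y; lra)). lra. }
  assert (Hr0lam : r0 < lam) by (pose proof (Hrge (1/2) ltac:(lra)); pose proof (Hrlt (1/2) ltac:(lra)); lra).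
  set (Z := fun x => 0 < x <= lam /\ forall t, 0 < t <= x -> t < r t).
  assert (HbZ : bound Z) by (exists lam; intros x Hx; unfold Z in Hx; lra).
  assert (HneZ : exists x, Z x).
  { exists (r0 / 2). split; [lra|]. intros t Ht. pose proof (Hrge t ltac:(lra)). lra. }
  destruct (completeness Z HbZ HneZ) as [rs [Hub Hlub]].
  assert (Hrs0 : 0 < rs) by (destruct HneZ as [x Hx]; pose proof (Hub x Hx); unfold Z in Hx; lra).
  assert (Hrsl : rs <= lam) by (apply Hlub; intros x Hx; unfold Z in Hx; lra).
  assert (Hbelow : forall t, 0 < t < rs -> t < r t).
  { intros t Ht. destruct (classic (exists x, Z x /\ t <= x)) as [[x [Zx Htx]]|Hn].
    - apply (proj2 Zx). lra.
    - exfalso. assert (is_upper_bound Z t).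
      { intros x Zx. destruct (Rle_or_lt x t); auto. exfalso. apply Hn. exists x. split; auto; lra. }
      specialize (Hlub t H). lra. }
  assert (Hdd : forall x, 0 < x < 1 -> derivable_pt_lim (fun y => r y - y) x (r1 x - 1)).
  { intros x Hx. apply derivable_pt_lim_minus. apply Hrdl; auto. apply derivable_pt_lim_id. }
  assert (Hrseq : r rs = rs).
  { destruct (Req_dec (r rs - rs) 0) as [|Hne]; [lra|]. exfalso.
    destruct (cont_sign _ _ _ (Hdd rs ltac:(lra)) Hne) as [d [Hd Hs]].
    destruct (Rlt_or_le (r rs - rs) 0) as [Hneg|Hpos].
    - pose proof (Rmin_l (d/2) (rs/2)). pose proof (Rmin_r (d/2) (rs/2)).
      assert (0 < Rmin (d/2) (rs/2)) by (apply Rmin_glb_lt; lra).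
      set (y := rs - Rmin (d/2) (rs/2)).
      destruct (Hs y ltac:(apply Rabs_def1; unfold y; lra)) as [_ Hs2].
      specialize (Hs2 Hneg). pose proof (Hbelow y ltac:(unfold y; lra)). lra.
    - assert (Hpos' : 0 < r rs - rs) by lra.
      assert (Hrsl' : rs < lam).
      { destruct (Req_dec rs lam) as [He|]; [|lra]. pose proof (Hrlt lam ltac:(lra)). rewrite He in Hpos'. lra. }
      pose proof (Rmin_l (rs + d/2) lam). pose proof (Rmin_r (rs + d/2) lam).
      assert (rs < Rmin (rs + d/2) lam) by (apply Rmin_glb_lt; lra).
      assert (HZ : Z (Rmin (rs + d/2) lam)).
      { split; [lra|]. intros t Ht. destruct (Rlt_or_le t rs). apply Hbelow; lra.
        destruct (Hs t ltac:(apply Rabs_def1; lra)) as [Hs1 _]. specialize (Hs1 Hpos'). lra. }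
      pose proof (Hub _ HZ). lra. }
  assert (Hrs1 : rs < 1) by lra.
  assert (Hrse : rs < eps) by lra.
  assert (Hrange : forall x, 0 < x <= rs -> 0 < x < 1 /\ x < eps /\ r0 <= r x /\ r x < lam /\ x <= r x).
  { intros x Hx. repeat split; try lra. apply Hrge; lra. apply Hrlt; lra.
    destruct (Req_dec x rs) as [->|]; [lra|]. pose proof (Hbelow x ltac:(lra)). lra. }
  assert (Hfx : forall x, 0 < x <= rs -> 0 < f x /\ 0 < f (r x) /\ f x <= f (r x) /\ f r0 <= f (r x)).
  { intros x Hx. destruct (Hrange x Hx) as [H1 [H2 [H3 [H4 H5]]]].
    destruct (Hff x ltac:(lra)). destruct (Hff (r x) ltac:(lra)).
    repeat split; auto.
    - destruct (Req_dec x (r x)) as [<-|]; [lra|]. left; apply Hfs; lra.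
    - destruct (Req_dec r0 (r x)) as [<-|]; [lra|]. left; apply Hfs; lra. }
  assert (Htau1 : forall x, 0 < x <= rs -> 1 <= tau f r x).
  { intros x Hx. destruct (Hfx x Hx) as [A1 [A2 [A3 _]]]. unfold tau.
    apply (Rmult_le_reg_r (f x)); auto. unfold Rdiv. rewrite Rmult_assoc, Rinv_l by lra. lra. }
  assert (Htau1s : forall x, 0 < x < rs -> 1 < tau f r x).
  { intros x Hx. destruct (Hrange x ltac:(lra)) as [H1 [H2 [H3 [H4 H5]]]].
    destruct (Hfx x ltac:(lra)) as [A1 [A2 [A3 _]]]. pose proof (Hbelow x Hx).
    pose proof (Hfs x (r x) ltac:(lra) ltac:(lra) ltac:(lra)). unfold tau.
    apply (Rmult_lt_reg_r (f x)); auto. unfold Rdiv. rewrite Rmult_assoc, Rinv_l by lra. lra. }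
  set (dtau := fun y => (f1 (r y) * r1 y - f1 y * tau f r y) / f y).
  assert (Hdtau : forall x, 0 < x <= rs -> derivable_pt_lim (tau f r) x (dtau x)).
  { intros x Hx. destruct (Hrange x Hx) as [H1 [H2 [H3 [H4 H5]]]]. destruct (Hfx x Hx) as [A1 _].
    apply tau_deriv. apply Hdf; lra. apply Hdf; lra. apply Hrdl; lra. lra. }
  assert (Hodex : forall x, 0 < x <= rs ->
     f x * (phi2 (r1 x) + h2 (r1 x * (tau f r x * tau f r x ^ m)) *
        ((tau f r x * tau f r x ^ m) * (tau f r x * tau f r x ^ m))) * r2 x =
     INR (S m) * (f1 (r x) * phi1 (tau f r x) - f1 x * phi1 (r1 x))
     - INR (S m) * (f1 (r x) * r1 x - f1 x * tau f r x) * h2 (r1 x * (tau f r x * tau f r x ^ m))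
       * r1 x * (tau f r x * (tau f r x ^ m * tau f r x ^ m))).
  { intros x Hx. destruct (Hrange x Hx) as [H1 _]. specialize (Hode x H1). cbv zeta in Hode.
    rewrite pow_Sm, pow_2n1, pow_2n3, INR_n1 in Hode. exact Hode. }
  assert (Hw : forall x, 0 < x < rs -> r1 x < tau f r x).
  { assert (Hneg : forall x, 0 < x < rs -> (fun y => r1 y - tau f r y) x < 0).
    { apply (neg_lemma _ (fun y => r2 y - dtau y) rs Hrs0).
      - intros x Hx. apply derivable_pt_lim_minus. apply Hr2; lra. apply Hdtau; lra.
      - intros x Hx Hz. simpl in Hz. assert (Hz' : r1 x = tau f r x) by lra.
        pose proof (Hodex x ltac:(lra)) as Ho'. rewrite Hz' in Ho'.
        destruct (Hrange x ltac:(lra)) as [H1 [H2 [H3 [H4 H5]]]].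
        destruct (Hfx x ltac:(lra)) as [A1 [A2 _]].
        pose proof (Htau1s x Hx) as Ht1. pose proof (Hbelow x Hx) as Hb.
        set (t := tau f r x) in *. set (u := t ^ m) in *.
        assert (Hu : 0 < u) by (unfold u; apply pow_lt; lra).
        pose proof (Hii t Ht1) as Hii'. rewrite pow_n, pow_2nm1 in Hii'. fold u in Hii'.
        pose proof (Hf1s x (r x) ltac:(lra) ltac:(lra) ltac:(lra)) as Hf1x.
        assert (Hk0 : 0 < INR (S m)) by (apply lt_0_INR; lia).
        set (a := t * (t * u)) in *.
        assert (Hrhs : INR (S m) * (f1 (r x) * phi1 t - f1 x * phi1 t)
          - INR (S m) * (f1 (r x) * t - f1 x * t) * h2 a * t * (t * (u * u))
          = INR (S m) * (f1 (r x) - f1 x) * (phi1 t - h2 a * (t * t * t * (u * u)))) by ring.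
        rewrite Hrhs in Ho'.
        assert (HR : INR (S m) * (f1 (r x) - f1 x) * (phi1 t - h2 a * (t * t * t * (u * u))) < 0).
        { assert (0 < INR (S m) * (f1 (r x) - f1 x)) by nra. nra. }
        assert (Hc0 : 0 <= f x * (phi2 t + h2 a * (t * u * (t * u)))).
        { pose proof (Hp2n t ltac:(lra)). assert (Ha : 0 < a) by (unfold a; apply Rmult_lt_0_compat; [lra| apply Rmult_lt_0_compat; lra]). pose proof (Hh2n a Ha).
          assert (0 <= t * u * (t * u)) by apply Rle_0_sqr.
          apply Rmult_le_pos; [lra| apply Rplus_le_le_0_compat; [lra| apply Rmult_le_pos; lra]]. }
        assert (Hr2n : r2 x < 0).
        { destruct (Rlt_or_le (r2 x) 0) as [|Hge]; auto. nra. }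
        assert (Hdt : 0 < dtau x).
        { unfold dtau. fold t. rewrite Hz'. apply Rdiv_lt_0_compat; auto. nra. }
        lra.
      - intros [c [Hc Hpos]].
        assert (Hc1 : 0 < f1 c) by (destruct (Hff c ltac:(lra)); lra).
        destruct (Hfx c ltac:(lra)) as [_ [_ [_ _]]].
        assert (Hfr0 : 0 < f r0) by (destruct (Hff r0 ltac:(lra)); lra).
        apply (no_blowup r r1 (f r0 / f1 c) c r0).
        + lra.
        + apply Rdiv_lt_0_compat; auto.
        + exact Hr0p.
        + intros x Hx. apply Hrdl. lra.
        + intros x Hx. specialize (Hpos x Hx). simpl in Hpos.
          destruct (Hfx x ltac:(lra)) as [A1 [A2 [A3 A4]]].
          pose proof (Hfl x c ltac:(lra) ltac:(lra) ltac:(lra)).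
          apply Rle_lt_trans with (tau f r x); [|lra].
          unfold tau. replace (f r0 / f1 c / x) with (f r0 / (f1 c * x)) by (field; lra).
          apply div_le; [nra|lra|]. nra.
        + intros x Hx. apply Hrge. lra. }
    intros x Hx. specialize (Hneg x Hx). simpl in Hneg. lra. }
  set (Sg := fun y => phi1 (r1 y) / (tau f r y) ^ S m + h1 (r1 y * (tau f r y) ^ S m)).
  set (DSg := fun y => (phi2 (r1 y) * r2 y * (tau f r y ^ S m)
      - (INR (S m) * tau f r y ^ m * dtau y) * phi1 (r1 y)) / Rsqr (tau f r y ^ S m)
      + h2 (r1 y * tau f r y ^ S m) * (r2 y * tau f r y ^ S m + r1 y * (INR (S m) * tau f r y ^ m * dtau y))).
  assert (HdS : forall x, 0 < x <= rs -> derivable_pt_lim Sg x (DSg x)).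
  { intros x Hx. destruct (Hrange x Hx) as [H1 _]. pose proof (Htau1 x Hx).
    assert (HE : 1 <= tau f r x ^ S m) by (apply pow_R1_Rle; lra).
    pose proof (Hr1p x ltac:(lra)).
    apply Sig_deriv. apply Hdtau; auto. apply Hr2; lra. apply Hp2; lra.
    apply Hh2. nra. lra. }
  assert (HDS : forall x, 0 < x < rs -> 0 <= DSg x /\ (0 < phi1 (tau f r x) -> 0 < DSg x)).
  { intros x Hx. destruct (Hrange x ltac:(lra)) as [H1 [H2 [H3 [H4 H5]]]].
    destruct (Hfx x ltac:(lra)) as [A1 [A2 _]].
    pose proof (Htau1s x Hx) as Ht1. pose proof (Hw x Hx) as Hwx. pose proof (Hr1p x ltac:(lra)) as Hr1x.
    pose proof (Hodex x ltac:(lra)) as Ho'.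
    assert (Hf1r : 0 < f1 (r x)) by (destruct (Hff (r x) ltac:(lra)); lra).
    assert (Hk0 : 0 < INR (S m)) by (apply lt_0_INR; lia).
    pose proof (key_alg (f x) (tau f r x) (tau f r x ^ m) (f1 (r x)) (f1 x) (phi1 (r1 x))
      (phi1 (tau f r x)) (phi2 (r1 x)) (h2 (r1 x * (tau f r x * tau f r x ^ m))) (r1 x) (r2 x)
      (INR (S m)) ltac:(lra) ltac:(lra) ltac:(apply pow_nonzero; lra) Ho') as Hkey.
    assert (Hk2 : f x * (tau f r x * tau f r x ^ m) * tau f r x * DSg x =
       INR (S m) * f1 (r x) * (tau f r x * phi1 (tau f r x) - r1 x * phi1 (r1 x))) by exact Hkey.
    clear Hkey.
    set (t := tau f r x) in *. set (u := t ^ m) in *.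
    assert (Hu : 0 < u) by (unfold u; apply pow_lt; lra).
    assert (HP : 0 < f x * (t * u) * t).
    { apply Rmult_lt_0_compat; [apply Rmult_lt_0_compat; [lra| apply Rmult_lt_0_compat; lra]| lra]. }
    assert (HG : 0 <= t * phi1 t - r1 x * phi1 (r1 x)) by (pose proof (HA5 (r1 x) t Hr1x ltac:(lra)); lra).
    assert (HC : 0 < INR (S m) * f1 (r x)) by (apply Rmult_lt_0_compat; lra).
    assert (HCG : 0 <= INR (S m) * f1 (r x) * (t * phi1 t - r1 x * phi1 (r1 x))) by (apply Rmult_le_pos; lra).
    split.
    - destruct (Rle_or_lt 0 (DSg x)) as [|Hn]; auto. exfalso.
      assert (f x * (t * u) * t * DSg x < 0).
      { rewrite <- (Rmult_0_r (f x * (t * u) * t)). apply Rmult_lt_compat_l; auto. }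
      lra.
    - intros Hpp.
      assert (HGs : 0 < t * phi1 t - r1 x * phi1 (r1 x)).
      { destruct (Rle_or_lt (phi1 (r1 x)) 0).
        - assert (r1 x * phi1 (r1 x) <= 0).
          { rewrite <- (Rmult_0_r (r1 x)). apply Rmult_le_compat_l; lra. }
          assert (0 < t * phi1 t) by (apply Rmult_lt_0_compat; lra). lra.
        - pose proof (Hp1m (r1 x) t Hr1x ltac:(lra)). nra. }
      assert (HCG2 : 0 < INR (S m) * f1 (r x) * (t * phi1 t - r1 x * phi1 (r1 x))) by (apply Rmult_lt_0_compat; lra).
      destruct (Rlt_or_le 0 (DSg x)) as [|Hn]; auto. exfalso.
      assert (f x * (t * u) * t * DSg x <= 0).
      { rewrite <- (Rmult_0_r (f x * (t * u) * t)). apply Rmult_le_compat_l; lra. }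
      lra. }
  assert (Hlim : forall e, 0 < e -> exists d, 0 < d /\ forall x, 0 < x < d -> x < rs -> Rabs (Sg x) < e).
  { intros e He. destruct (HT e He) as [d [Hd HTd]]. exists d. split; auto. intros x Hx Hxr.
    specialize (HTd x Hx). unfold T_fun in HTd. cbv zeta in HTd. rewrite pow_Sm in HTd.
    pose proof (Htau1 x ltac:(lra)) as Ht1.
    assert (ES : Sg x = phi1 (r1 x) / (tau f r x * tau f r x ^ m) + h1 (r1 x * (tau f r x * tau f r x ^ m))) by reflexivity.
    set (t := tau f r x) in *. set (u := t ^ m) in *.
    assert (Hu : 1 <= u) by (unfold u; apply pow_R1_Rle; lra).
    assert (ET : t * u * (phi1 (r1 x) + h1 (r1 x * (t * u)) * (t * u)) = (t * u) * (t * u) * Sg x).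
    { rewrite ES. field. split; lra. }
    rewrite ET, Rabs_mult in HTd.
    assert (HE : 1 <= Rabs (t * u * (t * u))).
    { rewrite Rabs_pos_eq by (apply Rle_0_sqr). assert (1 <= t * u) by nra. nra. }
    pose proof (Rabs_pos (Sg x)). nra. }
  assert (Hfr0 : 0 < f r0) by (destruct (Hff r0 ltac:(lra)); lra).
  destruct (f_small _ _ _ Ho (f r0 / V)) as [d0 [Hd0 Hsm]]; [apply Rdiv_lt_0_compat; lra|].
  assert (HVt : forall x, 0 < x < d0 -> x <= rs -> V <= tau f r x).
  { intros x Hx Hxr. specialize (Hsm x Hx). destruct (Hfx x ltac:(lra)) as [A1 [A2 [A3 A4]]].
    assert (V * f x < f r0).
    { apply (Rmult_lt_compat_l V) in Hsm; auto. replace (V * (f r0 / V)) with (f r0) in Hsm by (field; lra). lra. }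
    unfold tau. apply (Rmult_le_reg_r (f x)); auto. unfold Rdiv. rewrite Rmult_assoc, Rinv_l by lra. lra. }
  pose proof (Rmin_l d0 rs). pose proof (Rmin_r d0 rs).
  assert (0 < Rmin d0 rs) by (apply Rmin_glb_lt; lra).
  set (y1 := Rmin d0 rs / 2) in *.
  assert (Hy01 : Sg (y1 / 2) < Sg y1).
  { apply (smono Sg DSg). unfold y1; lra.
    - intros c Hc. apply HdS. unfold y1 in *; lra.
    - intros c Hc. apply (proj2 (HDS c ltac:(unfold y1 in *; lra))). apply HVp. apply HVt; unfold y1 in *; lra. }
  assert (Hy0 : 0 <= Sg (y1 / 2)).
  { destruct (Rle_or_lt 0 (Sg (y1 / 2))) as [|Hn]; auto. exfalso.
    destruct (Hlim (- Sg (y1 / 2))) as [d [Hd Hc]]; [lra|].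
    pose proof (Rmin_l d (y1/2)). pose proof (Rmin_r d (y1/2)).
    assert (0 < Rmin d (y1/2)) by (apply Rmin_glb_lt; unfold y1 in *; lra).
    set (x := Rmin d (y1/2) / 2) in *.
    specialize (Hc x ltac:(unfold x; lra) ltac:(unfold x, y1 in *; lra)). apply Rabs_def2 in Hc.
    assert (Sg x <= Sg (y1 / 2)).
    { apply (mono Sg DSg). unfold x; lra.
      - intros c Hc'. apply HdS. unfold x, y1 in *; lra.
      - intros c Hc'. apply (proj1 (HDS c ltac:(unfold x, y1 in *; lra))). }
    lra. }
  assert (Hy1 : Sg y1 <= Sg rs).
  { apply (mono Sg DSg). unfold y1; lra.
    - intros c Hc. apply HdS. unfold y1 in *; lra.
    - intros c Hc. apply (proj1 (HDS c ltac:(unfold y1 in *; lra))). }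
  assert (Htrs : tau f r rs = 1).
  { unfold tau. rewrite Hrseq. destruct (Hfx rs ltac:(lra)) as [A1 _]. field. lra. }
  assert (Hr1rs : r1 rs <= 1).
  { pose proof (deriv_le0 (fun y => r y - y) rs (r1 rs - 1) (Hdd rs ltac:(lra)) ltac:(simpl; lra) Hrs0
      ltac:(intros y Hy; pose proof (Hbelow y Hy); simpl; lra)). lra. }
  assert (HSrs : Sg rs <= 0).
  { assert (ES : Sg rs = phi1 (r1 rs) / (tau f r rs) ^ S m + h1 (r1 rs * (tau f r rs) ^ S m)) by reflexivity.
    rewrite ES, Htrs, pow1, Rmult_1_r. unfold Rdiv. rewrite Rinv_1, Rmult_1_r.
    pose proof (Hr1p rs ltac:(lra)).
    pose proof (Hp1m (r1 rs) 1 ltac:(lra) Hr1rs). pose proof (Hh1m (r1 rs) 1 ltac:(lra) Hr1rs). lra. }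
  lra.
Qed.
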